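(* With $\Omega_n=\{1,\dots,n\}$, $\mathcal P_n=\mathcal P(\Omega_n)$, and $\{\gamma_n\}_{n\ge2}$ where $\gamma_n$ maps each $p\in\mathcal P_n$ continuously to a bilinear form $\gamma_{n,p}$ on $\mathbb R^{\Omega_n}$, the following are equivalent: (i') there exist $c_1,c_2\in\mathbb R$ such that for all $n$, $p\in\mathcal P_n$, $A,B\in\mathbb R^{\Omega_n}$: $\gamma_{n,p}(A,B)=c_1\langle A,B\rangle_p+c_2\langle A\rangle_p\langle B\rangle_p$; (ii-2) for all $m\le n$ and every surjection $F:\Omega_n\to\Omega_m$: $\gamma_{m,p^F}(A,B)=\gamma_{n,p}(A\circ F,B\circ F)$ for all $p\in\mathcal P_n$ and $A,B\in\mathbb R^{\Omega_m}$.
   Context: $\mathcal P(\Omega)$ is the set of strictly positive probability distributions on a finite set $\Omega$. $\langle A\rangle_p=\sum_\omega p(\omega)A(\omega)$ and $\langle A,B\rangle_p=\langle AB\rangle_p$. For a surjection $F:\Omega_n\to\Omega_m$ and $p\in\mathcal P_n$, $p^F(x)=\sum_{y\in F^{-1}(x)}p(y)$. *)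

(* Defs.v *)
From HB Require Import structures.
From mathcomp Require Import all_boot all_order all_algebra.
From mathcomp Require Import all_classical all_reals all_analysis.
Set Implicit Arguments. Unset Strict Implicit. Unset Printing Implicit Defensive.
Import Order.TTheory GRing.Theory Num.Theory.
Import numFieldNormedType.Exports.
Local Open Scope ring_scope.
Local Open Scope classical_set_scope.

(* Omega_n = 'I_n; real functions on Omega_n are row vectors 'rV[R]_n
   (so that they carry mathcomp-analysis' normed topology). *)

Definition posprob (R : realType) (n : nat) (p : 'rV[R]_n) : Prop :=
  (forall i, 0 < p ord0 i) /\ \sum_(i < n) p ord0 i = 1.

Definition expect (R : realType) (n : nat) (p A : 'rV[R]_n) : R :=
  \sum_(i < n) p ord0 i * A ord0 i.

Definition pinner (R : realType) (n : nat) (p A B : 'rV[R]_n) : R :=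
  \sum_(i < n) p ord0 i * (A ord0 i * B ord0 i).

Definition bilinear_form (R : realType) (n : nat)
    (g : 'rV[R]_n -> 'rV[R]_n -> R) : Prop :=
  (forall (a : R) (A A' B : 'rV[R]_n), g (a *: A + A') B = a * g A B + g A' B) /\
  (forall (a : R) (A B B' : 'rV[R]_n), g A (a *: B + B') = a * g A B + g A B').

Definition gram (R : realType) (n : nat) (g : 'rV[R]_n -> 'rV[R]_n -> R)
  : 'M[R]_n := \matrix_(i, j) g (delta_mx ord0 i) (delta_mx ord0 j).

Definition pushf (R : realType) (n m : nat) (F : 'I_n -> 'I_m) (p : 'rV[R]_n)
  : 'rV[R]_m := \row_(x < m) \sum_(y < n | F y == x) p ord0 y.

Definition compF (R : realType) (n m : nat) (A : 'rV[R]_m) (F : 'I_n -> 'I_m)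
  : 'rV[R]_n := \row_(y < n) A ord0 (F y).

(* Main.v *)
Require Import Defs.
From HB Require Import structures.
From mathcomp Require Import all_boot all_order all_algebra.
From mathcomp Require Import all_classical all_reals all_analysis.
Import Order.TTheory GRing.Theory Num.Theory.
Import numFieldNormedType.Exports.
Local Open Scope ring_scope.
Local Open Scope classical_set_scope.

From mathcomp Require Import ring lra perm.
Set Implicit Arguments. Unset Strict Implicit. Unset Printing Implicit Defensive.

Lemma bil_zero (R : realType) n (g : 'rV[R]_n -> 'rV[R]_n -> R) :
  bilinear_form g -> forall B, g 0 B = 0.
Proof.
move=> [H1 _] B; have := H1 1 0 0 B; rewrite scale1r addr0 mul1r => H.
lra.
Qed.

Lemma bil_suml (R : realType) n (g : 'rV[R]_n -> 'rV[R]_n -> R) (I : Type) (r : seq I)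
  (a : I -> R) (F : I -> 'rV[R]_n) B :
  bilinear_form g -> g (\sum_(i <- r) a i *: F i) B = \sum_(i <- r) a i * g (F i) B.
Proof.
move=> Hg; elim: r => [|x r IH]; first by rewrite !big_nil bil_zero.
by rewrite !big_cons (proj1 Hg) IH.
Qed.

Lemma bil_sumr (R : realType) n (g : 'rV[R]_n -> 'rV[R]_n -> R) (I : Type) (r : seq I)
  (a : I -> R) (F : I -> 'rV[R]_n) A :
  bilinear_form g -> g A (\sum_(i <- r) a i *: F i) = \sum_(i <- r) a i * g A (F i).
Proof.
move=> Hg; elim: r => [|x r IH].
  rewrite !big_nil; have := (proj2 Hg) 1 A 0 0; rewrite scale1r addr0 mul1r => H; lra.
by rewrite !big_cons (proj2 Hg) IH.
Qed.

Lemma bil_expand (R : realType) n (g : 'rV[R]_n -> 'rV[R]_n -> R) A B :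
  bilinear_form g -> g A B = \sum_i \sum_j A ord0 i * B ord0 j *
     g (delta_mx ord0 i) (delta_mx ord0 j).
Proof.
move=> Hg; rewrite [in LHS](row_sum_delta A).
rewrite bil_suml //.
apply: eq_bigr => i _; rewrite [in LHS](row_sum_delta B) bil_sumr // mulr_sumr.
by apply: eq_bigr => j _; rewrite mulrA [A _ _ * _]mulrC.
Qed.

Lemma pushf_sum (R : realType) n m (F : 'I_n -> 'I_m) (p : 'rV[R]_n) (h : 'I_m -> R) :
  \sum_x pushf F p ord0 x * h x = \sum_y p ord0 y * h (F y).
Proof.
rewrite (partition_big F xpredT) //=; apply: eq_bigr => x _.
rewrite mxE mulr_suml; apply: eq_bigr => y /eqP <-; by [].
Qed.

Lemma count_sig (R : realType) m (k : 'I_m -> nat) (h : 'I_m -> R) :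
  \sum_(y < \sum_i k i) h (tagnat.sig1 y) = \sum_x (k x)%:R * h x.
Proof.
have -> : \sum_x (k x)%:R * h x = \sum_x \sum_(t : 'I_(k x)) h x.
  by apply: eq_bigr => x _; rewrite sumr_const card_ord mulr_natl.
rewrite sig_big_dep /=.
rewrite (reindex _ (@tagnat.sig_bij_on _ k)) /=.
by apply: eq_bigr.
Qed.

Lemma posprob_pushf (R : realType) n m (F : 'I_n -> 'I_m) (p : 'rV[R]_n) :
  (forall x : 'I_m, exists y : 'I_n, F y = x) -> posprob p -> posprob (pushf F p).
Proof.
move=> Fs [pp p1]; split.
  move=> x; have [y Fy] := Fs x; rewrite mxE (bigD1 y) /=; last by rewrite Fy.
  apply: (lt_le_trans (pp y)); rewrite lerDl.
  by apply: sumr_ge0 => z _; exact: ltW.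
have := pushf_sum F p (fun _ => 1); under eq_bigr do rewrite mulr1.
by move=> ->; under eq_bigr do rewrite mulr1.
Qed.

Lemma pinner_pushf (R : realType) n m (F : 'I_n -> 'I_m) (p : 'rV[R]_n) A B :
  pinner (pushf F p) A B = pinner p (compF A F) (compF B F).
Proof.
rewrite /pinner (pushf_sum F p (fun x => A ord0 x * B ord0 x)).
by apply: eq_bigr => y _; rewrite !mxE.
Qed.

Lemma expect_pushf (R : realType) n m (F : 'I_n -> 'I_m) (p : 'rV[R]_n) A :
  expect (pushf F p) A = expect p (compF A F).
Proof.
rewrite /expect (pushf_sum F p (fun x => A ord0 x)).
by apply: eq_bigr => y _; rewrite !mxE.
Qed.

Definition unif (R : realType) (N : nat) : 'rV[R]_N := \row_(i < N) (N%:R)^-1.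

Lemma posprob_unif (R : realType) N : (0 < N)%N -> posprob (unif R N).
Proof.
move=> N0; split => [i|]; first by rewrite mxE invr_gt0 ltr0n.
under eq_bigr do rewrite mxE.
by rewrite sumr_const card_ord -[_ *+ N]mulr_natr mulVf // pnatr_eq0 -lt0n.
Qed.

Lemma tperm_eq (N : nat) (a b x y : 'I_N) : (tperm a b y == x) = (y == tperm a b x).
Proof. by apply/eqP/eqP => [<-|->]; rewrite tpermK. Qed.

Lemma unif_perm (R : realType) (gamma : forall n : nat, 'rV[R]_n -> 'rV[R]_n -> 'rV[R]_n -> R)
  (N : nat) :
  (forall m n : nat, (2 <= m)%N -> (m <= n)%N ->
      forall F : 'I_n -> 'I_m, (forall x : 'I_m, exists y : 'I_n, F y = x) ->
      forall p : 'rV[R]_n, posprob p -> forall A B : 'rV[R]_m,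
        gamma m (pushf F p) A B = gamma n p (compF A F) (compF B F)) ->
  (2 <= N)%N -> forall a b y z : 'I_N,
  gamma N (unif R N) (delta_mx ord0 y) (delta_mx ord0 z) =
  gamma N (unif R N) (delta_mx ord0 (tperm a b y)) (delta_mx ord0 (tperm a b z)).
Proof.
move=> Hinv N2 a b y z.
have Fs : forall x : 'I_N, exists y, tperm a b y = x.
  by move=> x; exists (tperm a b x); rewrite tpermK.
have := Hinv N N N2 (leqnn N) (tperm a b) Fs (unif R N) (posprob_unif R (ltnW N2))
   (delta_mx ord0 y) (delta_mx ord0 z).
have -> : pushf (tperm a b) (unif R N) = unif R N.
  apply/rowP => x; rewrite !mxE.
  under eq_bigl do rewrite tperm_eq.
  by rewrite big_pred1_eq mxE.
have cF : forall w, compF (delta_mx ord0 w) (tperm a b) = delta_mx ord0 (tperm a b w) :> 'rV[R]_N.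
  by move=> w; apply/rowP => x; rewrite !mxE tperm_eq.
by rewrite !cF.
Qed.

Definition e0 (R : realType) (N : nat) : 'rV[R]_N := \row_(j < N) ((j : nat) == 0%N)%:R.
Definition e1 (R : realType) (N : nat) : 'rV[R]_N := \row_(j < N) ((j : nat) == 1%N)%:R.
Definition aN (R : realType) (gamma : forall n : nat, 'rV[R]_n -> 'rV[R]_n -> 'rV[R]_n -> R) N :=
  gamma N (unif R N) (e0 R N) (e0 R N).
Definition bN (R : realType) (gamma : forall n : nat, 'rV[R]_n -> 'rV[R]_n -> 'rV[R]_n -> R) N :=
  gamma N (unif R N) (e0 R N) (e1 R N).

Lemma G_unif (R : realType) (gamma : forall n : nat, 'rV[R]_n -> 'rV[R]_n -> 'rV[R]_n -> R)
  (N : nat) :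
  (forall m n : nat, (2 <= m)%N -> (m <= n)%N ->
      forall F : 'I_n -> 'I_m, (forall x : 'I_m, exists y : 'I_n, F y = x) ->
      forall p : 'rV[R]_n, posprob p -> forall A B : 'rV[R]_m,
        gamma m (pushf F p) A B = gamma n p (compF A F) (compF B F)) ->
  (2 <= N)%N -> forall y z : 'I_N,
  gamma N (unif R N) (delta_mx ord0 y) (delta_mx ord0 z) =
  if y == z then aN gamma N else bN gamma N.
Proof.
move=> Hinv N2 y z.
have H := unif_perm Hinv N2.
pose o0 : 'I_N := Ordinal (ltn_trans (ltnSn 0) N2).
pose o1 : 'I_N := Ordinal N2.
have E0 : e0 R N = delta_mx ord0 o0 by apply/rowP => j; rewrite !mxE.
have E1 : e1 R N = delta_mx ord0 o1 by apply/rowP => j; rewrite !mxE.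
rewrite /aN /bN E0 E1.
have [<-|yz] := eqVneq y z.
  by rewrite (H y o0 y y) tpermL.
rewrite (H y o0 y z) tpermL.
set z' := tperm y o0 z.
have z'0 : o0 != z'.
  by rewrite /z' eq_sym -[X in _ != X](tpermL y o0) (inj_eq (@perm_inj _ (tperm y o0))) eq_sym.
rewrite (H z' o1 o0 z') tpermL tpermD //; first by rewrite eq_sym.
Qed.

Definition c1N (R : realType) (gamma : forall n : nat, 'rV[R]_n -> 'rV[R]_n -> 'rV[R]_n -> R) N :=
  N%:R * (aN gamma N - bN gamma N).
Definition c2N (R : realType) (gamma : forall n : nat, 'rV[R]_n -> 'rV[R]_n -> 'rV[R]_n -> R) N :=
  N%:R ^+ 2 * bN gamma N.

Lemma rat_formula (R : realType) (gamma : forall n : nat, 'rV[R]_n -> 'rV[R]_n -> 'rV[R]_n -> R)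
  (m : nat) (k : 'I_m -> nat) :
  (forall n : nat, (2 <= n)%N -> forall p : 'rV[R]_n, posprob p ->
     bilinear_form (gamma n p)) ->
  (forall m n : nat, (2 <= m)%N -> (m <= n)%N ->
      forall F : 'I_n -> 'I_m, (forall x : 'I_m, exists y : 'I_n, F y = x) ->
      forall p : 'rV[R]_n, posprob p -> forall A B : 'rV[R]_m,
        gamma m (pushf F p) A B = gamma n p (compF A F) (compF B F)) ->
  (2 <= m)%N -> (forall x, 0 < k x)%N -> forall i j : 'I_m,
  gamma m (\row_x ((k x)%:R / (\sum_x k x)%N%:R)) (delta_mx ord0 i) (delta_mx ord0 j) =
  c1N gamma (\sum_x k x)%N * (i == j)%:R * ((k i)%:R / (\sum_x k x)%N%:R) +
  c2N gamma (\sum_x k x)%N * ((k i)%:R / (\sum_x k x)%N%:R * ((k j)%:R / (\sum_x k x)%N%:R)).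
Proof.
move=> Hbil Hinv m2 kpos i j.
set N := (\sum_x k x)%N.
pose F : 'I_N -> 'I_m := @tagnat.sig1 m k.
have mN : (m <= N)%N.
  have : (\sum_(x < m) 1 <= N)%N by apply: leq_sum => x _; exact: kpos.
  by rewrite sum_nat_const card_ord muln1.
have N2 : (2 <= N)%N := leq_trans m2 mN.
have N0 : N%:R != 0 :> R by rewrite pnatr_eq0 -lt0n (ltn_trans _ N2).
have Fs : forall x : 'I_m, exists y : 'I_N, F y = x.
  by move=> x; exists (@tagnat.Rank m k x (Ordinal (kpos x))); rewrite /F tagnat.Rank1K.
have cs := count_sig (R := R) k.
have pF : pushf F (unif R N) = \row_x ((k x)%:R / N%:R).
  apply/rowP => x; rewrite !mxE big_mkcond /=.
  transitivity (\sum_(y < N) ((F y == x)%:R * N%:R^-1 : R)).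
    by apply: eq_bigr => y _; rewrite mxE; case: eqP; rewrite ?mul1r ?mul0r.
  rewrite (cs (fun x' => (x' == x)%:R * N%:R^-1)) (bigD1 x) //= eqxx mul1r big1 ?addr0 //.
  by move=> x' /negbTE ->; rewrite mul0r mulr0.
have := Hinv m N m2 mN F Fs (unif R N) (posprob_unif R (ltnW N2)) (delta_mx ord0 i) (delta_mx ord0 j).
rewrite pF => ->.
have cF : forall w, compF (delta_mx ord0 w) F = \row_y ((F y == w)%:R) :> 'rV[R]_N.
  by move=> w; apply/rowP => y; rewrite !mxE eqxx.
rewrite !cF (bil_expand _ _ (Hbil N N2 _ (posprob_unif R (ltnW N2)))).
set a := aN gamma N; set b := bN gamma N.
transitivity (\sum_(y < N) \sum_(z < N) ((a - b) * ((F y == i)%:R * (F z == j)%:R * (y == z)%:R)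
               + b * ((F y == i)%:R * (F z == j)%:R)) : R).
  apply: eq_bigr => y _; apply: eq_bigr => z _.
  rewrite !mxE (G_unif Hinv N2) -/a -/b; case: (y == z) => /=; ring.
under eq_bigr do rewrite big_split /=.
rewrite big_split /=.
have S1 : \sum_(y < N) \sum_(z < N) (a - b) * ((F y == i)%:R * (F z == j)%:R * (y == z)%:R)
   = (a - b) * ((k i)%:R * (i == j)%:R).
  transitivity (\sum_(y < N) (a - b) * ((F y == i)%:R * (F y == j)%:R) : R).
    apply: eq_bigr => y _; rewrite (bigD1 y) //= eqxx mulr1 big1 ?addr0 //.
    by move=> z /negbTE; rewrite eq_sym => ->; rewrite !mulr0.
  rewrite -mulr_sumr (cs (fun x => (x == i)%:R * (x == j)%:R)) (bigD1 i) //= big1.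
    by rewrite eqxx mul1r addr0.
  by move=> x /negbTE ->; rewrite mul0r mulr0.
have S2 : \sum_(y < N) \sum_(z < N) b * ((F y == i)%:R * (F z == j)%:R)
   = b * ((k i)%:R * (k j)%:R).
  transitivity (b * ((\sum_(y < N) (F y == i)%:R) * (\sum_(z < N) (F z == j)%:R)) : R).
    rewrite mulr_suml mulr_sumr; apply: eq_bigr => y _.
    by rewrite mulr_sumr mulr_sumr; apply: eq_bigr => z _.
  have C : forall w, \sum_(y < N) ((F y == w)%:R : R) = (k w)%:R.
    move=> w; rewrite (cs (fun x => (x == w)%:R)) (bigD1 w) //= eqxx mulr1 big1 ?addr0 //.
    by move=> x /negbTE ->; rewrite mulr0.
  by rewrite !C.
rewrite S1 S2 /c1N /c2N -/a -/b.
by field.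
Qed.

Lemma c_mult (R : realType) (gamma : forall n : nat, 'rV[R]_n -> 'rV[R]_n -> 'rV[R]_n -> R)
  (N M : nat) :
  (forall n : nat, (2 <= n)%N -> forall p : 'rV[R]_n, posprob p ->
     bilinear_form (gamma n p)) ->
  (forall m n : nat, (2 <= m)%N -> (m <= n)%N ->
      forall F : 'I_n -> 'I_m, (forall x : 'I_m, exists y : 'I_n, F y = x) ->
      forall p : 'rV[R]_n, posprob p -> forall A B : 'rV[R]_m,
        gamma m (pushf F p) A B = gamma n p (compF A F) (compF B F)) ->
  (2 <= N)%N -> (0 < M)%N ->
  c1N gamma (N * M) = c1N gamma N /\ c2N gamma (N * M) = c2N gamma N.
Proof.
move=> Hbil Hinv N2 M0.
have H := rat_formula (k := fun _ : 'I_N => M) Hbil Hinv N2 (fun _ => M0).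
have E : (\sum_(x < N) M = N * M)%N by rewrite sum_nat_const card_ord.
rewrite E in H.
have N0 : N%:R != 0 :> R by rewrite pnatr_eq0 -lt0n (ltn_trans _ N2).
have M0' : M%:R != 0 :> R by rewrite pnatr_eq0 -lt0n.
have U : \row_(x < N) (M%:R / (N * M)%N%:R) = unif R N :> 'rV[R]_N.
  by apply/rowP => x; rewrite !mxE natrM invfM mulrA mulrC mulrA mulVf // mul1r.
pose o0 : 'I_N := Ordinal (ltn_trans (ltnSn 0) N2).
pose o1 : 'I_N := Ordinal N2.
have E0 : e0 R N = delta_mx ord0 o0 by apply/rowP => j; rewrite !mxE.
have E1 : e1 R N = delta_mx ord0 o1 by apply/rowP => j; rewrite !mxE.
have Ha := H o0 o0; have Hb := H o0 o1.
rewrite U in Ha Hb.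
rewrite (G_unif Hinv N2) eqxx in Ha.
rewrite (G_unif Hinv N2) in Hb.
move: Ha Hb.
have -> : (o0 == o1) = false by apply/eqP => /(congr1 val).
set c1' := c1N gamma (N * M); set c2' := c2N gamma (N * M).
move=> /= Ha Hb.
rewrite /c1N /c2N Ha Hb.
split; field; rewrite ?natrM; apply/andP; split => //; rewrite mulf_neq0 //.
Qed.
Lemma approx (R : realType) m (p : 'rV[R]_m) (N0 : nat) :
  posprob p -> (0 < N0)%N ->
  exists k : 'I_m -> nat, (forall x, 0 < k x)%N /\
    forall i, `|p ord0 i - (k i)%:R / (\sum_x k x)%N%:R| <= m%:R / N0%:R.
Proof.
move=> [pp p1] N00.
pose k := fun x : 'I_m => (Num.truncn (N0%:R * p ord0 x)).+1.
exists k; split => // i.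
have kb : forall x, N0%:R * p ord0 x < (k x)%:R <= N0%:R * p ord0 x + 1.
  move=> x; have := truncn_itv (mulr_ge0 (ler0n _ N0) (ltW (pp x))).
  by rewrite /k => /andP[h1 h2]; rewrite h2 -natr1 lerD2r h1.
set N := (\sum_x k x)%N.
have NE : N%:R = \sum_x ((k x)%:R : R) by rewrite /N natr_sum.
have Nlo : N0%:R <= N%:R :> R.
  have -> : N0%:R = \sum_x N0%:R * p ord0 x :> R by rewrite -mulr_sumr p1 mulr1.
  rewrite NE; apply: ler_sum => x _.
  by case/andP: (kb x) => /ltW.
have Nhi : N%:R <= N0%:R + m%:R :> R.
  have -> : N0%:R + m%:R = \sum_x (N0%:R * p ord0 x + 1) :> R.
    by rewrite big_split /= -mulr_sumr p1 mulr1 sumr_const card_ord.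
  rewrite NE; apply: ler_sum => x _.
  by case/andP: (kb x).
have N0p : 0 < N0%:R :> R by rewrite ltr0n.
have Np : 0 < N%:R :> R by apply: lt_le_trans Nlo.
have pi1 : p ord0 i <= 1.
  rewrite -p1 (bigD1 i) //= lerDl; apply: sumr_ge0 => x _; exact: ltW.
have pi0 := pp i.
have [kl kh] := andP (kb i).
set K := (k i)%:R in kl kh *.
have NK : N%:R * (K / N%:R) = K by rewrite mulrC -mulrA mulVf ?mulr1 // gt_eqF.
have NM : N0%:R * (m%:R / N0%:R) = m%:R :> R by rewrite mulrC -mulrA mulVf ?mulr1 // gt_eqF.
have m1 : 1 <= m%:R :> R.
  by rewrite ler1n; apply: leq_ltn_trans (leq0n i) (ltn_ord i).
set d := p ord0 i - K / N%:R.
have Nd : N%:R * d = N%:R * p ord0 i - K by rewrite /d mulrBr NK.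
have A1 : N0%:R * p ord0 i <= N%:R * p ord0 i by rewrite ler_wpM2r // ltW.
have A2 : N%:R * p ord0 i <= N0%:R * p ord0 i + m%:R.
  apply: (le_trans (ler_wpM2r (ltW pi0) Nhi)); rewrite mulrDl lerD2l.
  by rewrite -[X in _ <= X]mulr1 ler_wpM2l.
have h1 : `|N%:R * d| <= m%:R by rewrite ler_norml Nd; apply/andP; split; lra.
have y0 : 0 <= m%:R / N0%:R :> R by rewrite divr_ge0.
rewrite -(ler_pM2l Np) -{1}(ger0_norm (ltW Np)) -normrM.
apply: (le_trans h1); nra.
Qed.
Lemma cont_eps (R : realType) (n:nat) (S : set 'rV[R]_n) (f : 'rV[R]_n -> 'M[R]_n) :
  {within S, continuous f} -> forall p, S p -> forall e, 0 < e ->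
  exists2 d, 0 < d & forall q, S q -> (forall i, `|p ord0 i - q ord0 i| < d) ->
   forall i j, `|f p i j - f q i j| < e.
Proof.
move=> /subspace_continuousP fc p Sp e e0.
have /cvgrPdist_lt /(_ e e0) := fc p Sp.
move=> /nbhs_ballP [d d0 Hd].
exists d => // q Sq Hq i j.
have : ball p d q.
  split => // i0 j0; rewrite ord1; exact: Hq.
move=> /Hd /(_ Sq).
move=> H; apply: le_lt_trans H.
rewrite [X in _ <= X]/Num.norm /= mx_normrE.
have -> : f p i j - f q i j = (f p - f q) (i, j).1 (i, j).2 by rewrite !mxE.
exact: (le_bigmax _ (fun ij => `|(f p - f q) ij.1 ij.2|) (i, j)).
Qed.

Lemma posprob_rat (R : realType) m (k : 'I_m -> nat) :
  (0 < m)%N -> (forall x, 0 < k x)%N -> posprob (\row_x ((k x)%:R / (\sum_x k x)%N%:R) : 'rV[R]_m).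
Proof.
move=> m0 kpos.
have Npos : forall i : 'I_m, 0 < (\sum_x k x)%N%:R :> R.
  move=> i; rewrite ltr0n (bigD1 i) //=; exact: ltn_addr.
split => [i|].
  by rewrite mxE divr_gt0 // ?ltr0n // -(ltr0n R) Npos.
rewrite (eq_bigr (fun x => (k x)%:R / (\sum_x k x)%N%:R)); last by move=> x _; rewrite mxE.
by rewrite -mulr_suml -natr_sum mulfV // gt_eqF // (Npos (Ordinal m0)).
Qed.

Lemma c_const (R : realType) (gamma : forall n : nat, 'rV[R]_n -> 'rV[R]_n -> 'rV[R]_n -> R)
  (N : nat) :
  (forall n : nat, (2 <= n)%N -> forall p : 'rV[R]_n, posprob p ->
     bilinear_form (gamma n p)) ->
  (forall m n : nat, (2 <= m)%N -> (m <= n)%N ->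
      forall F : 'I_n -> 'I_m, (forall x : 'I_m, exists y : 'I_n, F y = x) ->
      forall p : 'rV[R]_n, posprob p -> forall A B : 'rV[R]_m,
        gamma m (pushf F p) A B = gamma n p (compF A F) (compF B F)) ->
  (2 <= N)%N ->
  c1N gamma N = c1N gamma 2 /\ c2N gamma N = c2N gamma 2.
Proof.
move=> Hbil Hinv N2.
have [a1 a2] := c_mult (M := 2) Hbil Hinv N2 isT.
have [b1 b2] := c_mult (N := 2) (M := N) Hbil Hinv isT (ltnW N2).
by rewrite -a1 -a2 -b1 -b2 mulnC.
Qed.

Lemma rat_final (R : realType) (gamma : forall n : nat, 'rV[R]_n -> 'rV[R]_n -> 'rV[R]_n -> R)
  (m : nat) (k : 'I_m -> nat) :
  (forall n : nat, (2 <= n)%N -> forall p : 'rV[R]_n, posprob p ->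
     bilinear_form (gamma n p)) ->
  (forall m n : nat, (2 <= m)%N -> (m <= n)%N ->
      forall F : 'I_n -> 'I_m, (forall x : 'I_m, exists y : 'I_n, F y = x) ->
      forall p : 'rV[R]_n, posprob p -> forall A B : 'rV[R]_m,
        gamma m (pushf F p) A B = gamma n p (compF A F) (compF B F)) ->
  (2 <= m)%N -> (forall x, 0 < k x)%N -> forall i j : 'I_m,
  let q := \row_x ((k x)%:R / (\sum_x k x)%N%:R) : 'rV[R]_m in
  gamma m q (delta_mx ord0 i) (delta_mx ord0 j) =
  c1N gamma 2 * (i == j)%:R * q ord0 i + c2N gamma 2 * (q ord0 i * q ord0 j).
Proof.
move=> Hbil Hinv m2 kpos i j q.
have mN : (m <= \sum_x k x)%N.
  have : (\sum_(x < m) 1 <= \sum_x k x)%N by apply: leq_sum => x _; exact: kpos.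
  by rewrite sum_nat_const card_ord muln1.
have [E1 E2] := c_const Hbil Hinv (leq_trans m2 mN).
by rewrite /q rat_formula // E1 E2 !mxE.
Qed.

Lemma norm_small0 (R : realType) (x : R) : (forall e, 0 < e -> `|x| < e) -> x = 0.
Proof.
move=> H; have [//|nz] := eqVneq x 0.
by have := H `|x|; rewrite normr_gt0 nz ltxx => /(_ isT).
Qed.

Lemma gram_eq (R : realType) (gamma : forall n : nat, 'rV[R]_n -> 'rV[R]_n -> 'rV[R]_n -> R)
  (m : nat) (p : 'rV[R]_m) :
  (forall n : nat, (2 <= n)%N -> forall p : 'rV[R]_n, posprob p ->
     bilinear_form (gamma n p)) ->
  (forall n : nat, (2 <= n)%N ->
     {within [set p : 'rV[R]_n | posprob p], continuous (fun p => gram (gamma n p))}) ->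
  (forall m n : nat, (2 <= m)%N -> (m <= n)%N ->
      forall F : 'I_n -> 'I_m, (forall x : 'I_m, exists y : 'I_n, F y = x) ->
      forall p : 'rV[R]_n, posprob p -> forall A B : 'rV[R]_m,
        gamma m (pushf F p) A B = gamma n p (compF A F) (compF B F)) ->
  (2 <= m)%N -> posprob p -> forall i j : 'I_m,
  gamma m p (delta_mx ord0 i) (delta_mx ord0 j) =
  c1N gamma 2 * (i == j)%:R * p ord0 i + c2N gamma 2 * (p ord0 i * p ord0 j).
Proof.
move=> Hbil Hcont Hinv m2 pP i j.
apply/eqP; rewrite -subr_eq0; apply/eqP; apply: norm_small0 => e e0.
set c1 := c1N gamma 2; set c2 := c2N gamma 2.
have e20 : 0 < e / 2 by rewrite divr_gt0.
have [d d0 Hd] := cont_eps (Hcont m m2) pP e20.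
set C := `|c1| + 2 * `|c2| + 1.
have C0 : 0 < C by rewrite /C ltr_pwDr // addr_ge0 // mulr_ge0.
set eta := Order.min d (e / (2 * C)).
have eta0 : 0 < eta by rewrite lt_min d0 divr_gt0 // mulr_gt0.
pose N0 := (Num.truncn (m%:R / eta)).+1.
have N00 : (0 < N0)%N by [].
have mN0 : m%:R / N0%:R < eta.
  have := truncn_itv (divr_ge0 (ler0n R m) (ltW eta0)) => /andP[_].
  rewrite -/N0 ltr_pdivrMr // => h.
  by rewrite ltr_pdivrMr ?ltr0n // mulrC.
have [k [kpos Hk]] := approx pP N00.
set q := \row_x ((k x)%:R / (\sum_x k x)%N%:R) : 'rV[R]_m.
have qP : posprob q := posprob_rat R (ltn_trans (ltnSn 0) m2) kpos.
have close : forall x, `|p ord0 x - q ord0 x| < eta.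
  by move=> x; rewrite mxE; apply: (le_lt_trans (Hk x)).
have etad : eta <= d by rewrite /eta ge_min lexx.
have etae : eta <= e / (2 * C) by rewrite /eta ge_min lexx orbT.
have Hg := Hd q qP (fun x => lt_le_trans (close x) etad) i j.
rewrite !mxE in Hg.
have Hq := rat_final Hbil Hinv m2 kpos i j; rewrite /= -/q -/c1 -/c2 in Hq.
clearbody c1 c2.
have b01 : forall r : 'rV[R]_m, posprob r -> forall x, 0 <= r ord0 x <= 1.
  move=> r [rp r1] x; rewrite ltW //= -r1 (bigD1 x) //= lerDl.
  by apply: sumr_ge0 => y _; exact: ltW.
have HH : `|(c1 * (i == j)%:R * q ord0 i + c2 * (q ord0 i * q ord0 j)) -
     (c1 * (i == j)%:R * p ord0 i + c2 * (p ord0 i * p ord0 j))| <= C * eta.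
  have -> : (c1 * (i == j)%:R * q ord0 i + c2 * (q ord0 i * q ord0 j)) -
     (c1 * (i == j)%:R * p ord0 i + c2 * (p ord0 i * p ord0 j)) =
     c1 * ((i == j)%:R * (q ord0 i - p ord0 i)) + c2 * (q ord0 i * q ord0 j - p ord0 i * p ord0 j).
    by ring.
  apply: (le_trans (ler_normD _ _)); rewrite !normrM.
  have h1 : `|((i == j)%:R : R)| * `|q ord0 i - p ord0 i| <= eta.
    rewrite distrC; case: (i == j); rewrite ?normr1 ?normr0 ?mul1r ?mul0r; last exact: ltW.
    exact: ltW.
  have h2 : `|q ord0 i * q ord0 j - p ord0 i * p ord0 j| <= 2 * eta.
    have -> : q ord0 i * q ord0 j - p ord0 i * p ord0 j =
      q ord0 i * (q ord0 j - p ord0 j) + p ord0 j * (q ord0 i - p ord0 i) by ring.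
    apply: (le_trans (ler_normD _ _)); rewrite !normrM.
    have /andP[q0 q1] := b01 q qP i; have /andP[p0 p1] := b01 p pP j.
    have t1 : `|q ord0 i| * `|q ord0 j - p ord0 j| <= 1 * eta.
      apply: ler_pM => //; first by rewrite ger0_norm.
      by rewrite distrC; exact: ltW.
    have t2 : `|p ord0 j| * `|q ord0 i - p ord0 i| <= 1 * eta.
      apply: ler_pM => //; first by rewrite ger0_norm.
      by rewrite distrC; exact: ltW.
    lra.
  have := ler_wpM2l (normr_ge0 c1) h1; have := ler_wpM2l (normr_ge0 c2) h2.
  rewrite /C; lra.
have Ce : C * eta <= e / 2.
  apply: (le_trans (ler_wpM2l (ltW C0) etae)).
  by rewrite le_eqVlt; apply/orP; left; apply/eqP; field; rewrite gt_eqF.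
pose Gq := gamma m q (delta_mx ord0 i) (delta_mx ord0 j).
pose Hqq := c1 * (i == j)%:R * q ord0 i + c2 * (q ord0 i * q ord0 j).
set Gp := gamma m p _ _.
set Hp := c1 * _ * p ord0 i + _.
have -> : Gp - Hp = (Gp - Gq) + (Hqq - Hp) by rewrite /Gq Hq /Hqq; ring.
apply: (le_lt_trans (ler_normD _ _)).
have : e / 2 + e / 2 = e by field.
lra.
Qed.

Lemma form_from_gram (R : realType) n (g : 'rV[R]_n -> 'rV[R]_n -> R) (p : 'rV[R]_n) c1 c2 :
  bilinear_form g ->
  (forall i j, g (delta_mx ord0 i) (delta_mx ord0 j) =
     c1 * (i == j)%:R * p ord0 i + c2 * (p ord0 i * p ord0 j)) ->
  forall A B, g A B = c1 * pinner p A B + c2 * (expect p A * expect p B).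
Proof.
move=> Hg H A B; rewrite (bil_expand _ _ Hg).
transitivity (\sum_i \sum_j (c1 * (A ord0 i * B ord0 j * (i == j)%:R * p ord0 i)
    + c2 * ((p ord0 i * A ord0 i) * (p ord0 j * B ord0 j)))).
  by apply: eq_bigr => i _; apply: eq_bigr => j _; rewrite H; ring.
under eq_bigr do rewrite big_split /=.
rewrite big_split /=; congr (_ + _).
  rewrite /pinner mulr_sumr; apply: eq_bigr => i _.
  rewrite (bigD1 i) //= eqxx big1 ?addr0; first by rewrite mulr1; ring.
  by move=> j /negbTE; rewrite eq_sym => ->; rewrite mulr0 mul0r mulr0.
rewrite /expect mulr_suml mulr_sumr; apply: eq_bigr => i _.
by rewrite mulr_sumr mulr_sumr; apply: eq_bigr => j _; ring.
Qed.

Unset Implicit Arguments. Set Strict Implicit.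

Theorem mainTheorem10 (R : realType)
    (gamma : forall n : nat, 'rV[R]_n -> 'rV[R]_n -> 'rV[R]_n -> R) :
  (forall n : nat, (2 <= n)%N -> forall p : 'rV[R]_n, posprob p ->
     bilinear_form (gamma n p)) ->
  (forall n : nat, (2 <= n)%N ->
     {within [set p : 'rV[R]_n | posprob p], continuous (fun p => gram (gamma n p))}) ->
  ((exists c1 c2 : R, forall n : nat, (2 <= n)%N ->
      forall p : 'rV[R]_n, posprob p -> forall A B : 'rV[R]_n,
        gamma n p A B = c1 * pinner p A B + c2 * (expect p A * expect p B))
   <->
   (forall m n : nat, (2 <= m)%N -> (m <= n)%N ->
      forall F : 'I_n -> 'I_m, (forall x : 'I_m, exists y : 'I_n, F y = x) ->
      forall p : 'rV[R]_n, posprob p -> forall A B : 'rV[R]_m,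
        gamma m (pushf F p) A B = gamma n p (compF A F) (compF B F))).
Proof.
move=> Hbil Hcont; split.
  move=> [c1 [c2 H]] m n m2 mn F Fs p pP A B.
  rewrite H //; last exact: posprob_pushf.
  by rewrite H ?(leq_trans m2 mn) // pinner_pushf !expect_pushf.
move=> Hinv; exists (c1N gamma 2), (c2N gamma 2) => n n2 p pP A B.
apply: (form_from_gram (Hbil n n2 p pP)) => i j.
exact: gram_eq.
Qed.
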